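(* With the notation of the context, every $\alpha$-communal $k$-tuple $\mathbf{g}$ can be written in exactly one way as \[ \mathbf{g}=\mathbf{b}(\mathbf{a})+\sum_{i=1}^k c_i\mathbf{x}_i \] with $\mathbf{a}\in\mathcal{A}$ and $c_1,\dots,c_k\in\mathbb{Z}_{\ge 0}$; moreover, for every $\mathbf{a}\in\mathcal{A}$ and all $c_i\in\mathbb{Z}_{\ge0}$ the right-hand side is an $\alpha$-communal $k$-tuple. Explicitly, if $\mathbf{g}=[g_1,\dots,g_k]$ with $g=\sum g_i$, then $a_j$ is the least nonnegative residue of $m_jg-n_jg_j$ modulo $A$ and $c_j=(m_jg-n_jg_j-a_j)/A$. Furthermore, the sum of the entries of $\mathbf{b}(\mathbf{a})$ equals $b(\mathbf{a})=\frac{N}{A}\sum_{i=1}^k\frac{a_i}{n_i}$.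
   Context: Let $k\ge 2$ and let $\alpha_1,\dots,\alpha_k$ be nonnegative rational numbers such that the sum of any $k-1$ of them is at most $1$ and $\sum_i\alpha_i>1$. A $k$-tuple $[g_1,\dots,g_k]$ of integers is called $\alpha$-communal if $0\le g_i\le \alpha_i\sum_{j=1}^k g_j$ for every $i$. Write $\alpha_i=m_i/n_i$ in lowest terms with $n_i\ge 1$. Set $N=\prod_{i=1}^k n_i$, $A=N(\sum_{i=1}^k\alpha_i-1)$ (a positive integer), and $\hat\alpha_i=1-\sum_{j\ne i}\alpha_j$. For each $i$ define $\mathbf{x}_i=\frac{N}{n_i}[\alpha_1,\dots,\alpha_{i-1},\hat\alpha_i,\alpha_{i+1},\dots,\alpha_k]$, i.e. the $k$-tuple whose $j$-th entry is $\frac{N}{n_i}\alpha_j$ for $j\ne i$ and whose $i$-th entry is $\frac{N}{n_i}\hat\alpha_i$. Let $\mathcal{A}$ be the set of integer $k$-tuples $\mathbf{a}=(a_1,\dots,a_k)$ with $0\le a_i<A$ for all $i$ such that for every $1\le j\le k$ the integer $N\hat\alpha_j\frac{a_j}{n_j}+N\alpha_j\sum_{i\ne j}\frac{a_i}{n_i}$ is divisible by $A$. For $\mathbf{a}\in\mathcal{A}$ let $\mathbf{b}(\mathbf{a})=[b_1,\dots,b_k]=\sum_{i=1}^k\frac{a_i}{A}\mathbf{x}_i$, i.e. $b_j=\frac1A\left(N\hat\alpha_j\frac{a_j}{n_j}+N\alpha_j\sum_{i\ne j}\frac{a_i}{n_i}\right)$. *)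

(* Defs.v *)
From HB Require Import structures.
From mathcomp Require Import all_boot all_order all_algebra.
Set Implicit Arguments. Unset Strict Implicit. Unset Printing Implicit Defensive.
Import Order.TTheory GRing.Theory Num.Theory.
Local Open Scope ring_scope.

Section Communal.
Variable k : nat.
Variable al : 'I_k -> rat.

Definition mm (i : 'I_k) : int := numq (al i).
Definition nn (i : 'I_k) : int := denq (al i).

Definition NN : int := \prod_(i < k) nn i.

Definition alhat (i : 'I_k) : rat := 1 - \sum_(j < k | j != i) al j.

(* A = N (sum alpha_i - 1), an integer (the rational number is integral;
   numq recovers it as an int) *)
Definition AA : int := numq ((NN%:~R : rat) * (\sum_(i < k) al i - 1)).

Definition xvec (i j : 'I_k) : rat :=
  ((NN%:~R : rat) / (nn i)%:~R) * (if j == i then alhat i else al j).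

Definition Bnum (a : 'I_k -> int) (j : 'I_k) : rat :=
  (NN%:~R : rat) * alhat j * ((a j)%:~R / (nn j)%:~R)
  + (NN%:~R : rat) * al j * \sum_(i < k | i != j) ((a i)%:~R / (nn i)%:~R).

Definition inA (a : {ffun 'I_k -> int}) : Prop :=
  (forall i, 0 <= a i /\ a i < AA) /\
  (forall j, exists q : int, Bnum a j = (AA%:~R : rat) * q%:~R).

Definition bvec (a : 'I_k -> int) (j : 'I_k) : rat :=
  \sum_(i < k) ((a i)%:~R / (AA%:~R : rat)) * xvec i j.

Definition rhs (a c : 'I_k -> int) (j : 'I_k) : rat :=
  bvec a j + \sum_(i < k) (c i)%:~R * xvec i j.

Definition communal (g : 'I_k -> int) : Prop :=
  forall i, 0 <= g i /\ (g i)%:~R <= al i * (\sum_(j < k) g j)%:~R.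

End Communal.

(* Main.v *)
Set Warnings "-notation-overridden,-ambiguous-paths".
Require Import Defs.
From HB Require Import structures.
From mathcomp Require Import all_boot all_order all_algebra.
From mathcomp Require Import ring.
Set Implicit Arguments. Unset Strict Implicit. Unset Printing Implicit Defensive.
Import Order.TTheory GRing.Theory Num.Theory.
Local Open Scope ring_scope.

Section S.
Variable k : nat.
Variable al : 'I_k -> rat.
Hypothesis hnn : forall i, 0 <= al i.
Hypothesis hsub : forall i0 : 'I_k, \sum_(i < k | i != i0) al i <= 1.
Hypothesis hsum : 1 < \sum_(i < k) al i.

Let nq i : rat := (nn al i)%:~R.
Let Nq : rat := (NN al)%:~R.

Lemma nn_gt0 i : 0 < nn al i.
Proof. exact: denq_gt0. Qed.
Lemma nq_gt0 i : 0 < nq i.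
Proof. by rewrite /nq ltr0z nn_gt0. Qed.
Lemma nq_neq0 i : nq i != 0.
Proof. by rewrite gt_eqF ?nq_gt0. Qed.
Lemma mq_eq i : (mm al i)%:~R = nq i * al i.
Proof. by rewrite /nq /mm /nn numqE mulrC. Qed.
Lemma Nq_eq : Nq = \prod_(i < k) nq i.
Proof. by rewrite /Nq /NN rmorph_prod. Qed.
Lemma Nq_gt0 : 0 < Nq.
Proof. by rewrite Nq_eq; apply: prodr_gt0 => i _; apply: nq_gt0. Qed.

Let Pn i : int := \prod_(l < k | l != i) nn al l.

Lemma Nq_split i : Nq = nq i * (Pn i)%:~R.
Proof. by rewrite Nq_eq (bigD1 i) //= /Pn rmorph_prod. Qed.

Lemma Nq_div i : Nq / nq i = (Pn i)%:~R.
Proof. rewrite (Nq_split i) mulrC mulrA mulVf ?mul1r //; exact: nq_neq0. Qed.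

Lemma Nal_int i : Nq * al i = (mm al i * Pn i)%:~R.
Proof. by rewrite (Nq_split i) rmorphM /= mq_eq; ring. Qed.

Lemma Nsum_int : Nq * (\sum_(i < k) al i - 1) =
   (\sum_(i < k) (mm al i * Pn i) - NN al)%:~R.
Proof.
rewrite rmorphB /= rmorph_sum /= mulrBr mulr1 mulr_sumr.
by congr (_ - _); apply: eq_bigr => i _; rewrite Nal_int.
Qed.

Let Aq : rat := (AA al)%:~R.

Lemma Aq_eq : Aq = Nq * (\sum_(i < k) al i - 1).
Proof. by rewrite /Aq /AA Nsum_int numq_int. Qed.

Lemma Aq_gt0 : 0 < Aq.
Proof. by rewrite Aq_eq mulr_gt0 ?Nq_gt0 // subr_gt0. Qed.

Lemma AA_gt0 : 0 < AA al.
Proof. by rewrite -(ltr0z rat) Aq_gt0. Qed.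

Lemma Nij_int i j : j != i -> Nq / nq i * al j \is a Num.int.
Proof.
move=> ji; rewrite Nq_div /Pn (bigD1 j) //= rmorphM /= mulrAC -mq_eq.
by rewrite -rmorphM intr_int.
Qed.

Lemma xvec_int i j : xvec al i j \is a Num.int.
Proof.
rewrite /xvec -/Nq -/(nq i); case: eqP => [_|/eqP ji]; last exact: Nij_int.
rewrite /alhat mulrBr mulr1 mulr_sumr rpredB //.
  by rewrite Nq_div intr_int.
by apply: rpred_sum => l li; apply: Nij_int.
Qed.

Lemma alhat_eq i : alhat al i = 1 - (\sum_(l < k) al l - al i).
Proof. by rewrite /alhat [X in X - al i](bigD1 i) //= addrC addrK. Qed.

Lemma xvec_eq i j : xvec al i j = Nq / nq i * al j - (i == j)%:R * Aq / nq j.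
Proof.
rewrite /xvec -/Nq -/(nq i) eq_sym; case: eqP => [->|_]; last by rewrite mul0r mul0r subr0.
rewrite alhat_eq Aq_eq /= mul1r; ring.
Qed.

Lemma xvec_ge0 i j : 0 <= xvec al i j.
Proof.
rewrite /xvec -/Nq -/(nq i) mulr_ge0 //.
  by rewrite divr_ge0 ?ltW ?Nq_gt0 ?nq_gt0.
by case: eqP => _; rewrite ?subr_ge0.
Qed.

Definition Tq (v : 'I_k -> rat) j := (mm al j)%:~R * (\sum_(l < k) v l) - nq j * v j.

Lemma vclosed (la : 'I_k -> rat) l :
  \sum_(i < k) la i * xvec al i l =
  Nq * al l * (\sum_(i < k) la i / nq i) - la l * Aq / nq l.
Proof.
under eq_bigr => i _ do rewrite xvec_eq mulrBr.
rewrite sumrB; congr (_ - _).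
  by rewrite mulr_sumr; apply: eq_bigr => i _; ring.
rewrite (bigD1 l) //= eqxx big1 ?addr0 /=; first by rewrite mul1r mulrA.
by move=> i /negbTE ->; rewrite mul0r mul0r mulr0.
Qed.

Lemma Tq_comb (la : 'I_k -> rat) j :
  Tq (fun l => \sum_(i < k) la i * xvec al i l) j = la j * Aq.
Proof.
rewrite /Tq. under eq_bigr => l _ do rewrite vclosed.
set L := \sum_(i < k) la i / nq i.
have -> : \sum_(l < k) (Nq * al l * L - la l * Aq / nq l) = Nq * L.
  rewrite sumrB -mulr_suml -mulr_sumr.
  have -> : \sum_(i < k) la i * Aq / nq i = Aq * L.
    by rewrite /L mulr_sumr; apply: eq_bigr => i _; rewrite mulrCA mulrA.
  rewrite Aq_eq; ring.
rewrite vclosed -/L mq_eq; field; exact: nq_neq0.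
Qed.

Lemma Tq_recon (g : 'I_k -> rat) j :
  \sum_(i < k) (Tq g i / Aq) * xvec al i j = g j.
Proof.
rewrite vclosed.
have -> : \sum_(i < k) Tq g i / Aq / nq i =
   (\sum_(l < k) g l) * (\sum_(i < k) al i - 1) / Aq.
  have e i : Tq g i / Aq / nq i = (al i * (\sum_(l < k) g l) - g i) / Aq.
    rewrite /Tq mq_eq.
    have := nq_neq0 i; have := lt0r_neq0 Aq_gt0 => h1 h2; field.
    by rewrite h1 h2.
  rewrite (eq_bigr _ (fun i _ => e i)) -mulr_suml sumrB -mulr_suml; ring.
rewrite /Tq mq_eq Aq_eq.
have := nq_neq0 j; have := lt0r_neq0 Nq_gt0 => h1 h2.
have h3 : \sum_(i < k) al i - 1 != 0 by rewrite subr_eq0 gt_eqF.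
field. by rewrite h1 h2 h3.
Qed.

Lemma Tq_ext f1 f2 j : f1 =1 f2 -> Tq f1 j = Tq f2 j.
Proof. by move=> e; rewrite /Tq e (eq_bigr _ (fun l _ => e l)). Qed.

Lemma Tq_int (g : 'I_k -> int) j :
  Tq (fun l => (g l)%:~R) j = (mm al j * (\sum_(l < k) g l) - nn al j * g j)%:~R.
Proof. by rewrite /Tq rmorphB rmorphM rmorphM /= rmorph_sum. Qed.

Lemma Bnum_eq (a : 'I_k -> int) j :
  Bnum al a j = \sum_(i < k) (a i)%:~R * xvec al i j.
Proof.
rewrite /Bnum [in RHS](bigD1 j) //= /xvec eqxx mulr_sumr; congr (_ + _).
  by rewrite -/Nq -/(nq j); ring.
apply: eq_bigr => i /negbTE; rewrite eq_sym => ->; rewrite -/Nq -/(nq i); ring.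
Qed.

Lemma bvec_eq (a : 'I_k -> int) j : bvec al a j = Bnum al a j / Aq.
Proof.
rewrite Bnum_eq /bvec mulr_suml; apply: eq_bigr => i _; rewrite -/Aq; ring.
Qed.

Lemma rhs_eq (a c : 'I_k -> int) j :
  rhs al a c j = \sum_(i < k) ((a i)%:~R / Aq + (c i)%:~R) * xvec al i j.
Proof.
rewrite /rhs /bvec -big_split /=; apply: eq_bigr => i _; rewrite -/Aq; ring.
Qed.

Lemma decomp (g a c : 'I_k -> int) :
  (forall j, (g j)%:~R = rhs al a c j) ->
  forall j, mm al j * (\sum_(l < k) g l) - nn al j * g j = a j + c j * AA al.
Proof.
move=> hg j; apply/eqP; rewrite -(eqr_int rat) -Tq_int.
rewrite (@Tq_ext _ (fun l => \sum_(i < k) ((a i)%:~R / Aq + (c i)%:~R) * xvec al i l) j).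
  rewrite Tq_comb rmorphD rmorphM /= -/Aq mulrDl divfK //; exact: lt0r_neq0 Aq_gt0.
by move=> l; rewrite hg rhs_eq.
Qed.

Lemma xsum i : \sum_(j < k) xvec al i j = Nq / nq i.
Proof.
under eq_bigr => j _ do rewrite xvec_eq.
rewrite sumrB -mulr_sumr.
have -> : \sum_(j < k) (i == j)%:R * Aq / nq j = Aq / nq i.
  rewrite (bigD1 i) //= eqxx big1 ?addr0 ?mul1r //.
  by move=> j ji; rewrite eq_sym (negbTE ji) !mul0r.
rewrite Aq_eq /=; have := nq_neq0 i => h; field; exact: h.
Qed.

Lemma comm_iff (g : 'I_k -> int) j :
  ((g j)%:~R <= al j * (\sum_(l < k) g l)%:~R) =
  (0 <= mm al j * (\sum_(l < k) g l) - nn al j * g j).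
Proof.
rewrite -(ler0z rat) rmorphB !rmorphM /= mq_eq subr_ge0 -mulrA.
by rewrite ler_pM2l ?nq_gt0.
Qed.

Lemma int_numq (x : rat) : x \is a Num.int -> x = (numq x)%:~R.
Proof. by case/intrP=> m ->; rewrite numq_int. Qed.
End S.

Lemma modz_uniq (d q r : int) : 0 <= r < d ->
  ((q * d + r) %% d)%Z = r /\ ((q * d + r) %/ d)%Z = q.
Proof.
move=> /andP[r0 rd]; have d0 : d != 0 by rewrite gt_eqF // (le_lt_trans r0 rd).
split; first by rewrite modzMDl modz_small ?r0.
rewrite divzMDl // divz_small ?addr0 // r0 /= gtz0_abs //.
exact: le_lt_trans r0 rd.
Qed.

Theorem mainTheorem7 (k : nat) (hk : (1 < k)%N) (al : 'I_k -> rat)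
  (hnn : forall i, 0 <= al i)
  (hsub : forall i0 : 'I_k, \sum_(i < k | i != i0) al i <= 1)
  (hsum : 1 < \sum_(i < k) al i) :
  (* existence and uniqueness of the decomposition *)
  (forall g : {ffun 'I_k -> int}, communal al g ->
     exists! ac : {ffun 'I_k -> int} * {ffun 'I_k -> int},
       [/\ inA al ac.1, (forall i, 0 <= ac.2 i) &
           forall j, (g j)%:~R = rhs al ac.1 ac.2 j])
  /\
  (* every such right-hand side is an alpha-communal integer k-tuple *)
  (forall a c : {ffun 'I_k -> int}, inA al a -> (forall i, 0 <= c i) ->
     exists g : {ffun 'I_k -> int},
       communal al g /\ forall j, (g j)%:~R = rhs al a c j)
  /\
  (* explicit formulas for a and c *)
  (forall g a c : {ffun 'I_k -> int}, communal al g -> inA al a ->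
     (forall i, 0 <= c i) -> (forall j, (g j)%:~R = rhs al a c j) ->
     forall j,
       a j = ((mm al j * (\sum_(i < k) g i) - nn al j * g j) %% AA al)%Z /\
       (c j)%:~R = ((mm al j * (\sum_(i < k) g i) - nn al j * g j - a j)%:~R
                    / (AA al)%:~R : rat))
  /\
  (* sum of entries of b(a) *)
  (forall a : {ffun 'I_k -> int}, inA al a ->
     \sum_(j < k) bvec al a j
     = (NN al)%:~R / (AA al)%:~R * \sum_(i < k) ((a i)%:~R / (nn al i)%:~R)).
Proof.
have hA := AA_gt0 hsum.
have hAq : (AA al)%:~R != 0 :> rat by rewrite intr_eq0 gt_eqF.
have hd := decomp hsum.
have expl : forall g a c : {ffun 'I_k -> int}, inA al a ->
     (forall j, (g j)%:~R = rhs al a c j) -> forall j,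
       a j = ((mm al j * (\sum_(i < k) g i) - nn al j * g j) %% AA al)%Z /\
       c j = ((mm al j * (\sum_(i < k) g i) - nn al j * g j) %/ AA al)%Z.
  move=> g a c [hb _] hg j; rewrite (hd g a c hg j) addrC.
  have [h1 h2] := hb j.
  by have [-> ->] := modz_uniq (c j) (introT andP (conj h1 h2)); split.
split.
  move=> g hg.
  pose t j := mm al j * (\sum_(i < k) g i) - nn al j * g j.
  have t0 j : 0 <= t j by rewrite /t -comm_iff; case: (hg j).
  pose a := [ffun j => (t j %% AA al)%Z].
  pose c := [ffun j => (t j %/ AA al)%Z].
  have heq j : (g j)%:~R = rhs al a c j.
    rewrite rhs_eq -[LHS](Tq_recon hsum (fun l => (g l)%:~R) j).
    apply: eq_bigr => i _; congr (_ * _).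
    rewrite Tq_int -/(t i) {1}(divz_eq (t i) (AA al)) !ffunE.
    by rewrite rmorphD rmorphM /= mulrDl mulfK // addrC.
  exists (a, c); split.
    split; [ | by move=> i; rewrite /= ffunE divz_ge0 | exact: heq].
    split => /=.
      by move=> i; rewrite ffunE modz_ge0 ?gt_eqF // ltz_pmod.
    move=> j.
    have : bvec al a j = (g j)%:~R - \sum_(i < k) (c i)%:~R * xvec al i j.
      by rewrite heq /rhs addrK.
    move=> hb; have : bvec al a j \is a Num.int.
      rewrite hb rpredB ?intr_int //; apply: rpred_sum => i _.
      by rewrite rpredM ?intr_int ?xvec_int.
    case/intrP=> q hq; exists q; rewrite -hq bvec_eq mulrC divfK //.
  case=> a' c' [ha' hc' hg'] /=.
  congr pair; apply/ffunP => j; rewrite !ffunE; have [e1 e2] := expl g a' c' ha' hg' j.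
    by rewrite e1.
  by rewrite e2.
split.
  move=> a c ha hc.
  have hint j : rhs al a c j \is a Num.int.
    rewrite /rhs bvec_eq; case: ha => _ /(_ j) [q ->].
    rewrite [X in X / _]mulrC mulfK // rpredD ?intr_int //; apply: rpred_sum => i _.
    by rewrite rpredM ?intr_int ?xvec_int.
  pose g := [ffun j => numq (rhs al a c j)].
  have hg j : (g j)%:~R = rhs al a c j by rewrite ffunE -int_numq.
  exists g; split => // j; split.
    rewrite -(ler0z rat) hg rhs_eq; apply: sumr_ge0 => i _.
    rewrite mulr_ge0 ?xvec_ge0 // addr_ge0 ?ler0z ?hc //.
    rewrite divr_ge0 ?ler0z ?(ltW hA) //; by case: ha => /(_ i) [].
  rewrite comm_iff (hd g a c hg j) addr_ge0 ?mulr_ge0 ?hc ?(ltW hA) //.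
  by case: ha => /(_ j) [].
split.
  move=> g a c _ ha hc hg j; have [e1 e2] := expl g a c ha hg j.
  split => //; rewrite (hd g a c hg j) addrC addKr rmorphM /= mulfK //.
move=> a ha.
rewrite /bvec exchange_big /= mulr_sumr; apply: eq_bigr => i _.
rewrite -mulr_sumr xsum //; ring.
Qed.
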